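(* Let $M,K\in\mathbb{R}^{m\times m}$ be symmetric positive definite matrices, let $\nu>0$, $\omega>0$, $\theta=1+\nu\omega^2$, and let $H_1=\begin{pmatrix} M&0\\0&M\end{pmatrix}$, $H_2=\begin{pmatrix} K&0\\0&K\end{pmatrix}$ and \[ R=\frac{1}{\sqrt{\nu\theta}}\begin{pmatrix} -i\omega\nu I & \sqrt{\nu}\, I\\ -\sqrt{\nu}\, I & i\omega\nu I\end{pmatrix}, \] where $I$ is the $m\times m$ identity. For $\alpha>0$ define the MBAS iteration matrix \[ P_\alpha=(\alpha I_{2m}+\sqrt{\nu\theta}H_2)^{-1}(\alpha I_{2m}+\theta RH_1)(\alpha I_{2m}+\theta H_1)^{-1}(\alpha I_{2m}-\sqrt{\nu\theta}RH_2). \] Then for every $\alpha>0$, \[ \rho(P_\alpha)\le \eta_\alpha:=\max_{\lambda\in\sigma(M)}\frac{\sqrt{\alpha^2+\theta^2\lambda^2}}{\alpha+\theta\lambda}\;\max_{\mu\in\sigma(K)}\frac{\sqrt{\alpha^2+\nu\theta\mu^2}}{\alpha+\sqrt{\nu\theta}\,\mu}<1 . \] In particular the MBAS iteration $x^{(k+1)}=P_\alpha x^{(k)}+Q_\alpha\tilde b$ converges for every $\alpha>0$ and every initial guess.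
   Context: $\rho(\cdot)$ denotes the spectral radius and $\sigma(\cdot)$ the spectrum of a matrix. The MBAS iteration for the system $\tilde A x=\tilde b$, with $\tilde A=\theta H_1+\sqrt{\nu\theta}RH_2$, is: given $x^{(k)}$, solve $(\alpha I+\theta H_1)x^{(k+1/2)}=(\alpha I-\sqrt{\nu\theta}RH_2)x^{(k)}+\tilde b$ and then $(\alpha I+\sqrt{\nu\theta}H_2)x^{(k+1)}=(\alpha I+\theta RH_1)x^{(k+1/2)}-R\tilde b$; eliminating $x^{(k+1/2)}$ gives $x^{(k+1)}=P_\alpha x^{(k)}+Q_\alpha\tilde b$ with $Q_\alpha=\alpha(\alpha I+\sqrt{\nu\theta}H_2)^{-1}(I-R)(\alpha I+\theta H_1)^{-1}$. *)

(* Defs.v *)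
From HB Require Import structures.
From mathcomp Require Import all_boot all_order all_algebra.
From mathcomp Require Import complex polyrcf.
Set Implicit Arguments. Unset Strict Implicit. Unset Printing Implicit Defensive.
Import Order.TTheory GRing.Theory Num.Theory.
Local Open Scope ring_scope.

Definition sym_posdef (R : rcfType) (m : nat) (M : 'M[R]_m) : Prop :=
  M^T = M /\ forall x : 'rV[R]_m, x != 0 -> 0 < (x *m M *m x^T) 0 0.

Definition spectrumR (R : rcfType) (m : nat) (M : 'M[R]_m) : seq R :=
  rootsR (char_poly M).

(* max of f over the spectrum of a real matrix (f >= 0 in our uses) *)
Definition max_spec (R : rcfType) (m : nat) (M : 'M[R]_m) (f : R -> R) : R :=
  \big[Num.max/0]_(l <- spectrumR M) f l.

(* the complex eigenvalues (with multiplicity) of a complex square matrix: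
   the roots of its characteristic polynomial, which splits over R[i] *)
Definition eigenvalues_C (R : rcfType) (n : nat) (A : 'M[R[i]]_n) : seq R[i] :=
  sval (closed_field_poly_normal (char_poly A)).

(* spectral radius: max of moduli |z| (the library norm on R[i], a real number viewed in R via Re) *)
Definition spectral_radius (R : rcfType) (n : nat) (A : 'M[R[i]]_n) : R :=
  \big[Num.max/0]_(z <- eigenvalues_C A) complex.Re `|z|.

Definition cmx (R : rcfType) (m n : nat) (A : 'M[R]_(m, n)) : 'M[R[i]]_(m, n) :=
  map_mx (fun x => x%:C%C) A.

Definition H_of (R : rcfType) (m : nat) (M : 'M[R]_m) : 'M[R[i]]_(m + m) :=
  block_mx (cmx M) 0 0 (cmx M).

Definition Rmat (R : rcfType) (m : nat) (nu om : R) : 'M[R[i]]_(m + m) :=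
  let th := 1 + nu * om ^+ 2 in
  ((Num.sqrt (nu * th))^-1)%:C%C *:
    block_mx ((- ('i%C * (om * nu)%:C%C)) %:M) ((Num.sqrt nu)%:C%C %:M)
             ((- (Num.sqrt nu)%:C%C) %:M) (('i%C * (om * nu)%:C%C) %:M).

Definition P_alpha (R : rcfType) (m : nat) (M K : 'M[R]_m) (nu om alpha : R)
  : 'M[R[i]]_(m + m) :=
  let th := 1 + nu * om ^+ 2 in
  let s := Num.sqrt (nu * th) in
  let a := (alpha%:C%C)%:M : 'M[R[i]]_(m + m) in
  let H1 := H_of M in let H2 := H_of K in let Rm := Rmat m nu om in
  invmx (a + s%:C%C *: H2) *m (a + th%:C%C *: (Rm *m H1)) *m
  invmx (a + th%:C%C *: H1) *m (a - s%:C%C *: (Rm *m H2)).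

Definition eta_alpha (R : rcfType) (m : nat) (M K : 'M[R]_m) (nu om alpha : R) : R :=
  let th := 1 + nu * om ^+ 2 in
  max_spec M (fun l => Num.sqrt (alpha ^+ 2 + th ^+ 2 * l ^+ 2) / (alpha + th * l)) *
  max_spec K (fun mu => Num.sqrt (alpha ^+ 2 + nu * th * mu ^+ 2) /
                          (alpha + Num.sqrt (nu * th) * mu)).

(* Main.v *)
Require Import Defs.
From HB Require Import structures.
From mathcomp Require Import all_boot all_order all_algebra.
From mathcomp Require Import complex polyrcf spectral sesquilinear.
From mathcomp Require Import ring lra.
Set Implicit Arguments. Unset Strict Implicit. Unset Printing Implicit Defensive.
Import Order.TTheory GRing.Theory Num.Theory.
Local Open Scope ring_scope.
Local Open Scope sesquilinear_scope.

Section QF.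
Variable C : numClosedFieldType.

Lemma spectral_decomp n (A : 'M[C]_n) : A \is hermsymmx ->
  A = (spectralmx A)^t* *m diag_mx (spectral_diag A) *m spectralmx A.
Proof.
move=> hA; have /orthomx_spectralP E := hermitian_normalmx hA.
by rewrite -invmx_unitary ?spectral_unitarymx.
Qed.

Lemma unit_l n (P : 'M[C]_n) : P \is unitarymx -> P^t* *m P = 1%:M.
Proof. by move=> hP; rewrite -invmx_unitary // mulVmx ?unitarymx_unit. Qed.

Lemma qf_nonneg n (A : 'M[C]_n) (al be ga : C) (t : 'cV[C]_n) :
  A \is hermsymmx ->
  (forall i, 0 <= al + be * spectral_diag A 0 i + ga * (spectral_diag A 0 i)^+2) ->
  0 <= (t^t* *m (al%:M + be *: A + ga *: (A *m A)) *m t) 0 0.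
Proof.
move=> hA hd.
set P := spectralmx A; set d := spectral_diag A.
have uP : P \is unitarymx by apply: spectral_unitarymx.
have EA := spectral_decomp hA; rewrite -/P -/d in EA.
set g := \row_i (al + be * d 0 i + ga * (d 0 i)^+2).
have EG : al%:M + be *: A + ga *: (A *m A) = P^t* *m diag_mx g *m P.
  have -> : diag_mx g = al%:M + be *: diag_mx d + ga *: (diag_mx d *m diag_mx d).
    apply/matrixP => i j; rewrite mul_diag_mx !mxE.
    case: (eqVneq i j) => [->|nij]; first by rewrite ?eqxx /= !mulr1n expr2.
    by rewrite !mulr0n !mulr0 !addr0.
  rewrite !mulmxDr !mulmxDl.
  rewrite mul_mx_scalar -scalemxAl unit_l // scalemx1.
  rewrite -!scalemxAr -!scalemxAl -EA; congr (_ + _ *: _).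
  rewrite {1 2}EA !mulmxA -[_ *m P *m P^t*]mulmxA.
  by move/unitarymxP: uP => ->; rewrite mulmx1.
rewrite EG !mulmxA.
set u := P *m t.
have -> : t^t* *m P^t* *m diag_mx g *m P *m t = u^t* *m diag_mx g *m u.
  by rewrite /u !trmx_mul !map_mxM !mulmxA.
rewrite mul_mx_diag !mxE; apply: sumr_ge0 => j _; rewrite !mxE.
rewrite mulrC mulrA; apply: mulr_ge0; last by apply: hd.
exact: mul_conjC_ge0.
Qed.

Lemma adjM m n p (A : 'M[C]_(m, n)) (B : 'M[C]_(n, p)) : (A *m B)^t* = B^t* *m A^t*.
Proof. by rewrite trmx_mul map_mxM. Qed.
Lemma adjD m n (A B : 'M[C]_(m, n)) : (A + B)^t* = A^t* + B^t*.
Proof. by rewrite linearD map_mxD. Qed.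
Lemma adjZ m n (a : C) (A : 'M[C]_(m, n)) : (a *: A)^t* = a^* *: A^t*.
Proof. by rewrite linearZ map_mxZ. Qed.
Lemma adjS n (a : C) : (a%:M : 'M[C]_n)^t* = (a^*)%:M.
Proof. by rewrite tr_scalar_mx map_scalar_mx. Qed.

Lemma prodA n (H Rm : 'M[C]_n) (a b : C) :
  H^t* = H -> Rm^t* = - Rm -> Rm *m Rm = - 1%:M -> Rm *m H = H *m Rm ->
  a^* = a -> b^* = b ->
  (a%:M + b *: (Rm *m H))^t* *m (a%:M + b *: (Rm *m H)) =
  (a ^+ 2)%:M + (b ^+ 2) *: (H *m H).
Proof.
move=> hH hR hRR hc ha hb.
rewrite adjD adjS adjZ adjM hH hR ha hb.
rewrite mulmxDl !mulmxDr mul_scalar_mx mul_mx_scalar scale_scalar_mx -expr2.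
rewrite -!scalemxAl -!scalemxAr !scalerA mul_scalar_mx scalerA.
have -> : H *m - Rm *m (Rm *m H) = H *m H.
  by rewrite mulmxN mulNmx -mulmxA (mulmxA Rm) hRR mulNmx mul1mx mulmxN opprK.
rewrite mulmxN hc (mulrC b a) scalerN -expr2 -!addrA; congr (_ + _).
by rewrite addrA addrN add0r.
Qed.

Lemma prodB n (H : 'M[C]_n) (a b : C) :
  H^t* = H -> a^* = a -> b^* = b ->
  (a%:M + b *: H)^t* *m (a%:M + b *: H) =
  (a ^+ 2)%:M + (2 * a * b) *: H + (b ^+ 2) *: (H *m H).
Proof.
move=> hH ha hb.
rewrite adjD adjS adjZ hH ha hb.
rewrite mulmxDl !mulmxDr mul_scalar_mx mul_mx_scalar scale_scalar_mx -expr2.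
rewrite -!scalemxAl -!scalemxAr !scalerA mul_scalar_mx scalerA -expr2 -!addrA.
congr (_ + _); rewrite addrA -scalerDl; congr (_ + _); congr (_ *: _).
by ring.
Qed.

Lemma herm_adj n (H : 'M[C]_n) : H \is hermsymmx -> H^t* = H.
Proof. by move/is_hermitianmxP => /= E; rewrite {2}E expr0 scale1r. Qed.

Definition N2 n (x : 'cV[C]_n) := (x^t* *m x) 0 0.

Lemma norm_bound n (H Rm : 'M[C]_n) (a b c : C) (t : 'cV_n) :
  H \is hermsymmx -> Rm^t* = - Rm -> Rm *m Rm = - 1%:M -> Rm *m H = H *m Rm ->
  a^* = a -> b^* = b ->
  (forall i, 0 <= (c ^+ 2 - 1) * a ^+ 2 + (c ^+ 2 * (2 * a * b)) * spectral_diag H 0 i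
                  + ((c ^+ 2 - 1) * b ^+ 2) * (spectral_diag H 0 i) ^+ 2) ->
  N2 ((a%:M + b *: (Rm *m H)) *m t) <= c ^+ 2 * N2 ((a%:M + b *: H) *m t).
Proof.
move=> hH hR hRR hc ha hb hd.
have hH' := herm_adj hH.
set A := a%:M + b *: (Rm *m H); set B := a%:M + b *: H.
have E : ((c ^+ 2 - 1) * a ^+ 2)%:M + (c ^+ 2 * (2 * a * b)) *: H +
              ((c ^+ 2 - 1) * b ^+ 2) *: (H *m H) = c ^+ 2 *: (B^t* *m B) - A^t* *m A.
  rewrite /A /B prodA // prodB //.
  set HH := H *m H; apply/matrixP => i j; rewrite !mxE.
  ring.
have := qf_nonneg t hH hd; rewrite E.
have EE (U V : 'M[C]_1) : (c ^+ 2 *: U - V) 0 0 = c ^+ 2 * U 0 0 - V 0 0.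
  by rewrite !mxE.
rewrite /N2 !adjM mulmxBr mulmxBl -scalemxAr -scalemxAl EE !mulmxA.
by rewrite subr_ge0.
Qed.
End QF.

Section B.
Variable R : rcfType.
Local Notation C := (R[i]).

Lemma conj_i : Num.conj ('i%C : C) = - 'i%C.
Proof. by apply/eqP; rewrite eq_complex /= oppr0 !eqxx. Qed.
Lemma conj_real (x : R) : Num.conj (x%:C%C : C) = x%:C%C.
Proof. exact: conjc_real. Qed.

Lemma cmx_adj m (X : 'M[R]_m) : (cmx X)^t* = cmx X^T.
Proof. by apply/matrixP => i j; rewrite !mxE conj_real. Qed.

Lemma H_adj m (X : 'M[R]_m) : X^T = X -> (H_of X)^t* = H_of X.
Proof.
move=> hX; rewrite /H_of tr_block_mx map_block_mx !trmx0 !map_mx0.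
by rewrite !cmx_adj hX.
Qed.

Lemma H_herm m (X : 'M[R]_m) : X^T = X -> H_of X \is hermsymmx.
Proof. by move=> hX; apply/is_hermitianmxP; rewrite expr0 scale1r H_adj. Qed.

Lemma blk_mulS m (x y u v x' y' u' v' : C) :
  block_mx (x%:M : 'M_m) y%:M u%:M v%:M *m block_mx (x'%:M : 'M_m) y'%:M u'%:M v'%:M =
  block_mx (x*x'+y*u')%:M (x*y'+y*v')%:M (u*x'+v*u')%:M (u*y'+v*v')%:M.
Proof. by rewrite mulmx_block !mul_scalar_mx !scale_scalar_mx !raddfD. Qed.

Lemma blk_comm m (x y u v : C) (X : 'M[C]_m) :
  block_mx x%:M y%:M u%:M v%:M *m block_mx X 0 0 X =
  block_mx X 0 0 X *m block_mx x%:M y%:M u%:M v%:M.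
Proof.
by rewrite !mulmx_block !mulmx0 !mul0mx !addr0 !add0r !mul_scalar_mx !mul_mx_scalar.
Qed.

Lemma blk_adj m (x y u v : C) :
  (block_mx (x%:M : 'M_m) y%:M u%:M v%:M)^t* =
  block_mx (Num.conj x)%:M (Num.conj u)%:M (Num.conj y)%:M (Num.conj v)%:M.
Proof. by rewrite tr_block_mx map_block_mx !tr_scalar_mx !map_scalar_mx. Qed.

Lemma R_comm m (nu om : R) (X : 'M[R]_m) :
  Rmat m nu om *m H_of X = H_of X *m Rmat m nu om.
Proof. by rewrite /Rmat -scalemxAl -scalemxAr /H_of blk_comm. Qed.

Lemma scalarN m (a : C) : (- a)%:M = - (a%:M : 'M_m).
Proof. by apply/matrixP => i j; rewrite !mxE mulNrn. Qed.

Lemma R_adj m (nu om : R) : (Rmat m nu om)^t* = - Rmat m nu om.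
Proof.
rewrite /Rmat linearZ map_mxZ /= -/(_ ^t* ) blk_adj conj_real -scalerN.
congr (_ *: _).
rewrite opp_block_mx -!scalarN; congr block_mx; congr (_%:M);
  rewrite ?rmorphN ?rmorphM /= ?conj_i ?conj_real ?opprK //; ring.
Qed.

Lemma R_sq m (nu om : R) : 0 < nu -> Rmat m nu om *m Rmat m nu om = - 1%:M.
Proof.
move=> hnu.
have hth : 0 < nu * (1 + nu * om ^+ 2).
  by apply: mulr_gt0 => //; apply: ltr_pwDl => //; apply: mulr_ge0; [exact: ltW|exact: sqr_ge0].
set s := Num.sqrt (nu * (1 + nu * om ^+ 2)).
have hs : s ^+ 2 = nu * (1 + nu * om ^+ 2) by rewrite sqr_sqrtr // ltW.
have hs0 : s != 0 by rewrite gt_eqF // sqrtr_gt0.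
have hq : Num.sqrt nu ^+ 2 = nu by rewrite sqr_sqrtr // ltW.
have hreal : s^-1 * s^-1 * ((om * nu) ^+ 2 + Num.sqrt nu ^+ 2) = 1.
  rewrite hq -expr2 exprVn hs; field.
  by apply/andP; split; rewrite ?gt_eqF //; apply: ltr_pwDl => //; apply: mulr_ge0; [exact: ltW|exact: sqr_ge0].
have := congr1 (real_complex R) hreal.
rewrite !rmorphM rmorphD !rmorphXn /= rmorph1 => hC.
rewrite /Rmat -/s -scalemxAl -scalemxAr scalerA blk_mulS.
set I := 'i%C; set w := ((om * nu)%:C)%C; set q := ((Num.sqrt nu)%:C)%C.
have hI : I * I = -1 by rewrite -expr2 sqr_i.
have -> : - (I * w) * - (I * w) + q * - q = -(w^+2 + q^+2) + w^+2 * (I * I + 1) by ring.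
have -> : - q * q + I * w * (I * w) = -(w^+2 + q^+2) + w^+2 * (I * I + 1) by ring.
have -> : - (I * w) * q + q * (I * w) = 0 by ring.
have -> : - q * - (I * w) + I * w * - q = 0 by ring.
rewrite hI addNr mulr0 addr0 raddf0 -scalar_mx_block scale_scalar_mx.
rewrite mulrN -[in RHS]scalarN; congr (- _)%:M.
by rewrite -hC /w /q rmorphM.
Qed.

Lemma nonunit_ker (F : fieldType) n (A : 'M[F]_n) : A \notin unitmx ->
  exists2 x : 'cV[F]_n, A *m x = 0 & x != 0.
Proof.
move=> hA; have hAT : A^T \notin unitmx by rewrite unitmxE det_tr -unitmxE.
have hk : kermx A^T != 0 by rewrite kermx_eq0 row_free_unit.
have hv : nz_row (kermx A^T) *m A^T = 0 by apply/eqP; rewrite -sub_kermx nz_row_sub.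
exists (nz_row (kermx A^T))^T.
  by have := congr1 trmx hv; rewrite trmx_mul !trmxK trmx0.
by rewrite trmx_eq0 nz_row_eq0.
Qed.

Lemma in_spec m (X : 'M[R]_m) (l : R) : root (char_poly X) l -> l \in spectrumR X.
Proof.
move=> hr; have := roots_on_rootsR (monic_neq0 (char_poly_monic X)) l.
by rewrite /spectrumR in_itv /= hr => <-.
Qed.

Lemma spec_pos m (X : 'M[R]_m) (l : R) : sym_posdef X -> root (char_poly X) l -> 0 < l.
Proof.
move=> [_ hX]; rewrite -eigenvalue_root_char => /eigenvalueP [x hx x0].
have := hX x x0; rewrite hx -scalemxAl mxE.
have hS : 0 <= (x *m x^T) 0 0.
  by rewrite mxE; apply: sumr_ge0 => j _; rewrite mxE -expr2 sqr_ge0.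
move=> h; rewrite ltNge; apply/negP => hl; move: h; rewrite ltNge mulr_le0_ge0 //.
Qed.

Lemma H_eig m (X : 'M[R]_m) (l : R) (v : 'rV[C]_(m + m)) :
  sym_posdef X -> v *m H_of X = (l%:C)%C *: v -> v != 0 ->
  l \in spectrumR X /\ 0 < l.
Proof.
move=> hX hv v0.
suff hr : root (char_poly X) l by split; [exact: in_spec | exact: (spec_pos hX)].
rewrite -(fmorph_root (real_complex R)) map_char_poly -eigenvalue_root_char.
rewrite -[v]hsubmxK /H_of mul_row_block !mulmx0 addr0 add0r scale_row_mx in hv.
have [h1 h2] := eq_row_mx hv.
move: v0; rewrite -[v]hsubmxK row_mx_eq0 negb_and => /orP [] w0; apply/eigenvalueP.
  by exists (lsubmx v).
by exists (rsubmx v).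
Qed.

Lemma B_unit m (X : 'M[R]_m) (a b : R) : sym_posdef X -> 0 < a -> 0 < b ->
  ((a%:C)%C%:M + (b%:C)%C *: H_of X) \in unitmx.
Proof.
move=> hX ha hb.
case: (boolP ((a%:C)%C%:M + (b%:C)%C *: H_of X \in unitmx)) => // hn.
have hnT : ((a%:C)%C%:M + (b%:C)%C *: H_of X)^T \notin unitmx.
  by rewrite unitmxE det_tr -unitmxE.
have hk : kermx ((a%:C)%C%:M + (b%:C)%C *: H_of X)^T != 0 by rewrite kermx_eq0 row_free_unit.
set v := nz_row (kermx ((a%:C)%C%:M + (b%:C)%C *: H_of X)^T).
have v0 : v != 0 by rewrite nz_row_eq0.
have : v *m ((a%:C)%C%:M + (b%:C)%C *: H_of X)^T = 0 by apply/eqP; rewrite -sub_kermx nz_row_sub.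
rewrite linearD /= linearZ /= tr_scalar_mx.
have hXT : (H_of X)^T = H_of X.
  by rewrite /H_of tr_block_mx !trmx0; by rewrite /cmx map_trmx (proj1 hX).
rewrite hXT mulmxDr mul_mx_scalar -scalemxAr => /eqP; rewrite addrC addr_eq0 => /eqP hv.
have hv' : v *m H_of X = ((- (a / b))%:C)%C *: v.
  have hb0 : (b%:C)%C != 0 :> C by rewrite eq_complex /= negb_and gt_eqF.
  by rewrite -[v *m _](scalerK hb0) hv scalerN scalerA rmorphN rmorphM fmorphV /= mulrC scaleNr.
have [_ hl] := H_eig hX hv' v0.
by move: hl; rewrite oppr_gt0 ltNge divr_ge0 // ltW.
Qed.

Lemma spec_diag_eig m (X : 'M[R]_m) (i : 'I_(m + m)) :
  sym_posdef X ->
  let d := spectral_diag (H_of X) 0 i in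
  d = ((complex.Re d)%:C)%C /\ complex.Re d \in spectrumR X /\ 0 < complex.Re d.
Proof.
move=> hX d.
have hH := H_herm (proj1 hX).
have hreal : d = ((complex.Re d)%:C)%C.
  have /mxOverP hr := hermitian_spectral_diag_real hH.
  by rewrite RRe_real // hr.
split => //.
set P := spectralmx (H_of X).
have uP : P \is unitarymx by apply: spectral_unitarymx.
have EA := spectral_decomp hH.
have EP : P *m H_of X = diag_mx (spectral_diag (H_of X)) *m P.
  rewrite {1}EA -/P !mulmxA.
  by move/unitarymxP: uP => ->; rewrite mul1mx.
have hrow : row i P *m H_of X = ((complex.Re d)%:C)%C *: row i P.
  by rewrite -row_mul EP row_mul row_diag_mx -scalemxAl -rowE -hreal.
have r0 : row i P != 0.
  rewrite rowE mul_mx_rowfree_eq0; last by rewrite row_free_unit unitarymx_unit.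
  apply/eqP => /matrixP /(_ 0 i); rewrite !mxE !eqxx /= => /eqP; by rewrite oner_eq0.
exact: H_eig hX hrow r0.
Qed.
End B.

Section D.
Variable R : rcfType.
Local Notation C := (R[i]).

Lemma eig_col n (A : 'M[C]_n) z : z \in eigenvalues_C A ->
  exists2 x : 'cV[C]_n, A *m x = z *: x & x != 0.
Proof.
rewrite /eigenvalues_C; case: closed_field_poly_normal => r /= hr hz.
have hroot : root (char_poly A) z.
  by rewrite hr (monicP (char_poly_monic A)) scale1r root_prod_XsubC.
move: hroot; rewrite -eigenvalue_root_char /eigenvalue /eigenspace kermx_eq0 row_free_unit.
move=> /nonunit_ker [x hx x0]; exists x => //.
by move: hx; rewrite mulmxBl mul_scalar_mx => /eqP; rewrite subr_eq0 => /eqP.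
Qed.

Lemma N2Z n (z : C) (y : 'cV[C]_n) : N2 (z *: y) = `|z| ^+ 2 * N2 y.
Proof.
by rewrite /N2 adjZ -scalemxAl -scalemxAr scalerA [in LHS]mxE normCK (mulrC z).
Qed.

Lemma N2_gt0 n (y : 'cV[C]_n) : y != 0 -> 0 < N2 y.
Proof.
move=> y0.
have hge : forall j : 'I_n, true -> 0 <= (y^t* ) 0 j * y j 0.
  by move=> j _; rewrite !mxE mulrC mul_conjC_ge0.
have hN : N2 y = \sum_j (y^t* ) 0 j * y j 0 by rewrite /N2 mxE.
rewrite lt0r hN sumr_ge0 ?andbT; last by move=> j _; apply: hge.
apply/eqP => h; move/eqP: y0; apply.
apply/matrixP => j k; rewrite ord1 mxE.
have := psumr_eq0P hge h (i:=j) isT.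
by rewrite !mxE mulrC => /eqP; rewrite mulf_eq0 conjC_eq0 orbb => /eqP.
Qed.

Definition fab (a b l : R) := Num.sqrt (a ^+ 2 + b ^+ 2 * l ^+ 2) / (a + b * l).

Lemma fab_props (a b l : R) : 0 < a -> 0 < b -> 0 < l ->
  0 <= fab a b l /\ fab a b l < 1.
Proof.
move=> ha hb hl.
have hd : 0 < a + b * l by apply: addr_gt0 => //; apply: mulr_gt0.
split; first by apply: divr_ge0; [exact: sqrtr_ge0 | exact: ltW].
rewrite /fab ltr_pdivrMr // mul1r.
have -> : a + b * l = Num.sqrt ((a + b * l) ^+ 2) by rewrite sqrtr_sqr ger0_norm // ltW.
rewrite ltr_sqrt; last by apply: exprn_gt0.
have : 0 < 2 * a * (b * l) by apply: mulr_gt0; [apply: mulr_gt0|apply: mulr_gt0].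
by rewrite sqrrD exprMn; lra.
Qed.

Lemma max_spec_props m (X : 'M[R]_m) (a b : R) (g : R -> R) :
  sym_posdef X -> 0 < a -> 0 < b -> (forall l, 0 < l -> g l = fab a b l) ->
  [/\ 0 <= max_spec X g, max_spec X g < 1 &
   forall l, l \in spectrumR X -> a ^+ 2 + b ^+ 2 * l ^+ 2 <= (max_spec X g) ^+ 2 * (a + b * l) ^+ 2].
Proof.
move=> hX ha hb hg.
have hpos : forall l, l \in spectrumR X -> 0 < l.
  move=> l hl; apply: (spec_pos hX).
  exact: (roots_on_root (roots_on_rootsR (monic_neq0 (char_poly_monic X))) hl).
have h01 : forall l, l \in spectrumR X -> 0 <= g l /\ g l < 1.
  by move=> l hl; rewrite hg ?hpos //; apply: fab_props => //; apply: hpos.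
have c0 : 0 <= max_spec X g.
  rewrite /max_spec big_seq; apply: (big_ind (fun r => 0 <= r)) => //.
    by move=> x y hx hy; rewrite le_max hx.
  by move=> i hi; case: (h01 i hi).
split => //.
  rewrite /max_spec big_seq; apply: (big_ind (fun r => r < 1)) => //.
    by move=> x y hx hy; rewrite gt_max hx hy.
  by move=> i hi; case: (h01 i hi).
move=> l hl.
have hle : g l <= max_spec X g by rewrite /max_spec; apply: le_bigmax_seq.
have hd : 0 < a + b * l by apply: addr_gt0 => //; apply: mulr_gt0 => //; apply: hpos.
have hfl : fab a b l ^+ 2 <= max_spec X g ^+ 2.
  rewrite ler_sqr ?nnegrE -?hg ?hpos //; by case: (h01 l hl).
move: hfl; rewrite /fab expr_div_n sqr_sqrtr; last first.
  by apply: addr_ge0; [exact: sqr_ge0 | apply: mulr_ge0; exact: sqr_ge0].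
by rewrite ler_pdivrMr // exprn_gt0.
Qed.

Lemma coef_ok (a b c l : R) : a ^+ 2 + b ^+ 2 * l ^+ 2 <= c ^+ 2 * (a + b * l) ^+ 2 ->
  0 <= ((c%:C)%C ^+ 2 - 1) * (a%:C)%C ^+ 2 + ((c%:C)%C ^+ 2 * (2 * (a%:C)%C * (b%:C)%C)) * (l%:C)%C
        + (((c%:C)%C ^+ 2 - 1) * (b%:C)%C ^+ 2) * (l%:C)%C ^+ 2 :> C.
Proof.
move=> h.
have -> : ((c%:C)%C ^+ 2 - 1) * (a%:C)%C ^+ 2 + ((c%:C)%C ^+ 2 * (2 * (a%:C)%C * (b%:C)%C)) * (l%:C)%C
        + (((c%:C)%C ^+ 2 - 1) * (b%:C)%C ^+ 2) * (l%:C)%C ^+ 2 =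
  (((c ^+ 2 - 1) * a ^+ 2 + (c ^+ 2 * (2 * a * b)) * l + ((c ^+ 2 - 1) * b ^+ 2) * l ^+ 2)%:C)%C.
  by rewrite !rmorphD !rmorphM !rmorphB !rmorphXn rmorph1 /= rmorph_nat.
rewrite ler0c.
have -> : (c ^+ 2 - 1) * a ^+ 2 + (c ^+ 2 * (2 * a * b)) * l + ((c ^+ 2 - 1) * b ^+ 2) * l ^+ 2
  = c ^+ 2 * (a + b * l) ^+ 2 - (a ^+ 2 + b ^+ 2 * l ^+ 2) by ring.
by rewrite subr_ge0.
Qed.

Lemma Rn_adj m (nu om : R) : (- Rmat m nu om)^t* = - - Rmat m nu om.
Proof. by rewrite linearN /= map_mxN R_adj. Qed.
Lemma Rn_sq m (nu om : R) : 0 < nu -> (- Rmat m nu om) *m (- Rmat m nu om) = - 1%:M.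
Proof. by move=> h; rewrite mulNmx mulmxN opprK R_sq. Qed.
Lemma Rn_comm m (nu om : R) (X : 'M[R]_m) :
  (- Rmat m nu om) *m H_of X = H_of X *m (- Rmat m nu om).
Proof. by rewrite mulNmx mulmxN R_comm. Qed.
End D.

Local Close Scope sesquilinear_scope.
Unset Implicit Arguments.
Set Strict Implicit.

Theorem theorem1 (R : rcfType) (m : nat) (M K : 'M[R]_m) (nu om : R) :
  sym_posdef M -> sym_posdef K -> 0 < nu -> 0 < om ->
  forall alpha : R, 0 < alpha ->
    spectral_radius (P_alpha M K nu om alpha) <= eta_alpha M K nu om alpha /\
    eta_alpha M K nu om alpha < 1.
Proof.
move=> hM hK hnu hom a ha.
have hth : 0 < 1 + nu * om ^+ 2.
  by apply: ltr_pwDl => //; apply: mulr_ge0; [exact: ltW|exact: sqr_ge0].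
have hnth : 0 < nu * (1 + nu * om ^+ 2) by apply: mulr_gt0.
have hs : 0 < Num.sqrt (nu * (1 + nu * om ^+ 2)) by rewrite sqrtr_gt0.
have hs2 : Num.sqrt (nu * (1 + nu * om ^+ 2)) ^+ 2 = nu * (1 + nu * om ^+ 2) by rewrite sqr_sqrtr // ltW.
pose c1 := max_spec M (fun l => Num.sqrt (a ^+ 2 + (1 + nu * om ^+ 2) ^+ 2 * l ^+ 2) /
     (a + (1 + nu * om ^+ 2) * l)).
pose c2 := max_spec K (fun mu => Num.sqrt (a ^+ 2 + nu * (1 + nu * om ^+ 2) * mu ^+ 2) /
                          (a + Num.sqrt (nu * (1 + nu * om ^+ 2)) * mu)).
have Eeta : eta_alpha M K nu om a = c1 * c2 by [].
have [c10 c11 c1b] := @max_spec_props R m M a (1 + nu * om ^+ 2)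
   (fun l => Num.sqrt (a ^+ 2 + (1 + nu * om ^+ 2) ^+ 2 * l ^+ 2) / (a + (1 + nu * om ^+ 2) * l))
   hM ha hth (fun l _ => erefl).
have gK : forall l, 0 < l -> Num.sqrt (a ^+ 2 + nu * (1 + nu * om ^+ 2) * l ^+ 2) /
                          (a + Num.sqrt (nu * (1 + nu * om ^+ 2)) * l) =
     fab a (Num.sqrt (nu * (1 + nu * om ^+ 2))) l by move=> l _; rewrite /fab hs2.
have [c20 c21 c2b] := @max_spec_props R m K a (Num.sqrt (nu * (1 + nu * om ^+ 2)))
   (fun mu => Num.sqrt (a ^+ 2 + nu * (1 + nu * om ^+ 2) * mu ^+ 2) /
                          (a + Num.sqrt (nu * (1 + nu * om ^+ 2)) * mu))
   hK ha hs gK.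
rewrite -/c1 -/c2 in c10 c11 c1b c20 c21 c2b.
rewrite Eeta; split; last by nra.
rewrite /spectral_radius big_seq; apply: (big_ind (fun r => r <= c1 * c2)).
- exact: mulr_ge0.
- by move=> x y hx hy; rewrite ge_max hx hy.
move=> z hz.
have [x hx x0] := eig_col hz.
rewrite /P_alpha /= in hx; move: hx.
set th := 1 + nu * om ^+ 2.
set s := Num.sqrt (nu * th).
set Rm := Rmat m nu om.
set B2 := _ + (s%:C)%C *: H_of K.
set B1 := _ + (th%:C)%C *: H_of M.
set A1 := _ + (th%:C)%C *: (Rm *m H_of M).
set A2 := _ - (s%:C)%C *: (Rm *m H_of K).
move=> hx.
have B2u : B2 \in unitmx by apply: B_unit.
have B1u : B1 \in unitmx by apply: B_unit.
set y := B2 *m x.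
have y0 : y != 0.
  apply: contraNneq x0 => hy; by rewrite -(mulKmx B2u x) -/y hy mulmx0.
have hAt : A1 *m (invmx B1 *m (A2 *m x)) = z *: y.
  have := congr1 (mulmx B2) hx.
  rewrite -!mulmxA.
  rewrite (mulKVmx B2u).
  by rewrite -scalemxAr.
set t := invmx B1 *m (A2 *m x).
have hBt : B1 *m t = A2 *m x by rewrite /t (mulKVmx B1u).
have hdM : forall i, 0 <= ((c1%:C)%C ^+ 2 - 1) * (a%:C)%C ^+ 2
    + ((c1%:C)%C ^+ 2 * (2 * (a%:C)%C * (th%:C)%C)) * spectral_diag (H_of M) 0 i
    + (((c1%:C)%C ^+ 2 - 1) * (th%:C)%C ^+ 2) * (spectral_diag (H_of M) 0 i) ^+ 2.
  move=> i; case: (spec_diag_eig i hM) => /= E [hl _]; rewrite E.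
  by apply: coef_ok; apply: c1b.
have hdK : forall i, 0 <= ((c2%:C)%C ^+ 2 - 1) * (a%:C)%C ^+ 2
    + ((c2%:C)%C ^+ 2 * (2 * (a%:C)%C * (s%:C)%C)) * spectral_diag (H_of K) 0 i
    + (((c2%:C)%C ^+ 2 - 1) * (s%:C)%C ^+ 2) * (spectral_diag (H_of K) 0 i) ^+ 2.
  move=> i; case: (spec_diag_eig i hK) => /= E [hl _]; rewrite E.
  by apply: coef_ok; apply: c2b.
have h1 := norm_bound t (H_herm (proj1 hM)) (R_adj m nu om) (R_sq m om hnu) (R_comm nu om M)
   (conj_real a) (conj_real th) hdM.
have eA2 : A2 = (a%:C)%C%:M + (s%:C)%C *: ((- Rm) *m H_of K).
  by rewrite /A2 mulNmx scalerN.
have h2 := norm_bound x (H_herm (proj1 hK)) (Rn_adj m nu om) (Rn_sq m om hnu) (Rn_comm nu om K)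
   (conj_real a) (conj_real s) hdK.
rewrite -eA2 -/B2 -/y in h2.
rewrite -/A1 -/B1 hAt hBt N2Z in h1.
have h3 : `|z| ^+ 2 * N2 y <= ((c1 * c2)%:C)%C ^+ 2 * N2 y.
  apply: (le_trans h1); rewrite rmorphM exprMn -[X in _ <= X]mulrA; apply: ler_wpM2l; last exact: h2.
  by rewrite -rmorphXn ler0c exprn_ge0.
rewrite ler_pM2r in h3; last exact: N2_gt0.
rewrite ler_sqr ?nnegrE ?normr_ge0 ?ler0c ?mulr_ge0 // in h3.
by move: h3; rewrite lecE => /andP [_].
Qed.
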